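(* Let $F$ be a formally real field, $L=F(I)$ with $I^2=-1$, let $\mathfrak k$ be the maximal compact subalgebra of a Kac--Moody algebra over $F$ with simply laced diagram $D$ on vertices $v_1,\dots,v_n$, labelled so that $\{v_1,\dots,v_r\}$ is an inclusion-maximal independent set. Let $\rho:\mathfrak k\to\operatorname{End}_L(V)$, $V=L^{m}$ with $m=2^{n-r}$, be the generalized spin representation obtained by starting with $X_i\mapsto\tfrac12 I\in\operatorname{End}(L^1)$ for $i\le r$ and successively, for $t=r,r+1,\dots,n-1$, extending a generalized spin representation $\rho_t$ of $\mathfrak k_{\le t}$ on $L^{s}$ to $\mathfrak k_{\le t+1}$ on $L^{s}\oplus L^{s}$ by $\rho_{t+1}|_{\mathfrak k_{\le t}}=\rho_t\oplus(\rho_t\circ s_0)$ and $\rho_{t+1}(X_{t+1})=\begin{pmatrix}0&\tfrac12I\,\mathrm{id}_s\\ \tfrac12I\,\mathrm{id}_s&0\end{pmatrix}$, where $s_0(X_i)=-X_i$ if $v_i$ is adjacent to $v_{t+1}$ and $s_0(X_i)=X_i$ otherwise. Then the $F$-Lie algebra $\operatorname{im}(\rho)\subseteq\operatorname{End}_L(V)$ is reductive. If moreover $D$ has no isolated vertices, then $\operatorname{im}(\rho)$ is semisimple.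
   Context: A field is formally real if $-1$ is not a sum of squares. A set of vertices is independent if it spans no edge. $\mathfrak k_{\le t}$ denotes the Lie algebra with generators $X_1,\dots,X_t$ and relations $[X_i,[X_i,X_j]]=-X_j$ for adjacent $v_i,v_j$, $[X_i,X_j]=0$ for non-adjacent $i\ne j$ ($i,j\le t$); for $t=n$ this is $\mathfrak k$ by Berman's theorem ($X_i=e_i-f_i$). A generalized spin representation is a Lie algebra homomorphism $\rho$ into $\operatorname{End}(L^s)$ with $\rho(X_i)^2=-\tfrac14\mathrm{id}_s$ for all generators. *)

(* Defs.v *)
From HB Require Import structures.
From mathcomp Require Import all_boot all_order all_algebra all_field.
Set Implicit Arguments. Unset Strict Implicit. Unset Printing Implicit Defensive.
Import GRing.Theory.
Local Open Scope ring_scope.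

Definition formally_real (F : fieldType) : Prop :=
  forall s : seq F, \sum_(x <- s) x ^+ 2 != -1.

Fixpoint msz (d : nat) : nat := if d is d'.+1 then msz d' + msz d' else 1%N.

Lemma msz_exp d : msz d = (2 ^ d)%N.
Proof. elim: d => [|d IH] //=. by rewrite IH expnS mul2n addnn. Qed.

Section Spin.
Variables (F : fieldType) (L : fieldExtType F) (I : L).
Variables (n r : nat) (adj : rel 'I_n).

Definition adjn (u : nat) (i : 'I_n) : bool :=
  [exists j : 'I_n, (val j == u) && adj j i].

(* spin d i = rho_{r+d}(X_i) (0-based vertex indices; meaningful for i < r+d):
   start with X_i |-> (1/2) I on L^1, and at step d -> d+1 (new generator
   with index r+d) use rho_t (+) (rho_t o s_0) and the antidiagonal block. *)
Fixpoint spin (d : nat) (i : 'I_n) : 'M[L]_(msz d) :=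
  match d with
  | 0 => (I / 2%:R)%:M
  | d'.+1 =>
      if val i == (r + d')%N then
        block_mx 0 (I / 2%:R)%:M (I / 2%:R)%:M 0
      else
        block_mx (spin d' i) 0 0
                 ((if adjn (r + d') i then -1 else 1) *: spin d' i)
  end.
End Spin.

(* Lie-algebra notions for F-subspaces of End_L(L^m) = 'M[L]_m, viewed as an
   F-Lie algebra (F acts by scalars c%:A in L). *)
Section Lie.
Variables (F : fieldType) (L : fieldExtType F) (m : nat).
Notation M := 'M[L]_m.

Definition lbr (A B : M) : M := A *m B - B *m A.

Definition Fscale (c : F) (A : M) : M := (c%:A : L) *: A.

Definition Fsubspace (S : M -> Prop) : Prop :=
  [/\ S 0, forall A B, S A -> S B -> S (A + B)
     & forall (c : F) A, S A -> S (Fscale c A)].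

Inductive lie_gen (G : M -> Prop) : M -> Prop :=
  | lg_gen A : G A -> lie_gen G A
  | lg_zero : lie_gen G 0
  | lg_add A B : lie_gen G A -> lie_gen G B -> lie_gen G (A + B)
  | lg_scale c A : lie_gen G A -> lie_gen G (Fscale c A)
  | lg_br A B : lie_gen G A -> lie_gen G B -> lie_gen G (lbr A B).

Inductive Fspan (G : M -> Prop) : M -> Prop :=
  | sp_gen A : G A -> Fspan G A
  | sp_zero : Fspan G 0
  | sp_add A B : Fspan G A -> Fspan G B -> Fspan G (A + B)
  | sp_scale c A : Fspan G A -> Fspan G (Fscale c A).

Fixpoint derived (h : M -> Prop) (k : nat) : M -> Prop :=
  match k with
  | 0 => h
  | k'.+1 => Fspan (fun C => exists A B, derived h k' A /\ derived h k' B
                                        /\ C = lbr A B)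
  end.

Definition solvable_lie (h : M -> Prop) : Prop :=
  exists k, forall A, derived h k A -> A = 0.

Definition lie_ideal (g h : M -> Prop) : Prop :=
  [/\ Fsubspace h, (forall A, h A -> g A)
     & forall A B, g A -> h B -> h (lbr A B)].

Definition lie_center (g : M -> Prop) (A : M) : Prop :=
  g A /\ forall B, g B -> lbr A B = 0.

Definition semisimple_lie (g : M -> Prop) : Prop :=
  forall h, lie_ideal g h -> solvable_lie h -> forall A, h A -> A = 0.

Definition reductive_lie (g : M -> Prop) : Prop :=
  forall h, lie_ideal g h -> solvable_lie h -> forall A, h A -> lie_center g A.
End Lie.

Definition spin_image (F : fieldType) (L : fieldExtType F) (I : L)
    {n : nat} (r : nat) (adj : rel 'I_n) : 'M[L]_(msz (n - r)) -> Prop :=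
  lie_gen (fun A => exists i : 'I_n, A = spin I r adj (n - r) i).
Arguments spin_image [F L] I {n} r adj _.

(* Main.v *)
Require Import Defs.
From HB Require Import structures.
From mathcomp Require Import all_boot all_order all_algebra all_field.
Import GRing.Theory.
Local Open Scope ring_scope.



Lemma sos0 (F : fieldType) (fr : formally_real F) (s : seq F) :
  \sum_(x <- s) x ^+ 2 = 0 -> all (fun x => x == 0) s.
Proof.
elim: s => [//|x s IH]; rewrite big_cons => H.
case: (eqVneq x 0) => [x0|xn0].
  by move: H; rewrite x0 expr0n add0r /= eqxx => /IH.
exfalso; move: (fr [seq y / x | y <- s]); rewrite big_map.
under eq_bigr do rewrite expr_div_n.
rewrite -mulr_suml.
have -> : \sum_(i <- s) i ^+ 2 = - x ^+ 2.
  by apply/eqP; rewrite -addr_eq0 addrC H.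
by rewrite mulNr divff ?eqxx // expf_neq0.
Qed.

Lemma zjac (V : zmodType) (a b c d e f : V) :
  a - b + d - c = a - e + d - f + e - c + f - b.
Proof.
rewrite (addrAC (a - e + d)) (addrAC (a - e)) subrK.
rewrite (addrAC (a + d - f)) subrK.
by rewrite (addrAC a (-b) d) (addrAC (a + d) (-b) (-c)).
Qed.

Section LieP.
Variables (F : fieldType) (L : fieldExtType F) (m : nat).
Notation M := 'M[L]_m.

Lemma lbrN (A B : M) : lbr A B = - lbr B A.
Proof. by rewrite /lbr opprB. Qed.

Lemma lbr0r (A : M) : lbr A 0 = 0.
Proof. by rewrite /lbr mulmx0 mul0mx subrr. Qed.

Lemma lbrDr (A B C : M) : lbr A (B + C) = lbr A B + lbr A C.
Proof. by rewrite /lbr mulmxDr mulmxDl opprD addrACA. Qed.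

Lemma lbrZr c (A B : M) : lbr A (Fscale c B) = Fscale c (lbr A B).
Proof. by rewrite /lbr /Fscale -scalemxAr -scalemxAl scalerBr. Qed.

Lemma jacobi (Y A B : M) : lbr Y (lbr A B) = lbr (lbr Y A) B + lbr A (lbr Y B).
Proof.
rewrite /lbr !(mulmxBl, mulmxBr) !mulmxA.
set a := Y *m A *m B; set b := Y *m B *m A; set c := A *m B *m Y;
set d := B *m A *m Y; set e := A *m Y *m B; set f := B *m Y *m A.
rewrite !opprB !addrA; apply: zjac.
Qed.

Lemma tr_lbr_l (P Q R : M) : \tr (lbr P Q *m R) = \tr (P *m lbr Q R).
Proof.
rewrite /lbr mulmxBl mulmxBr !raddfB /= -!mulmxA; congr (_ - _).
by rewrite mxtrace_mulC -mulmxA.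
Qed.

Lemma tr_lbr_r (Z P Q : M) : \tr (Z *m lbr P Q) = \tr (lbr Z P *m Q).
Proof.
rewrite /lbr mulmxBl mulmxBr !raddfB /= -!mulmxA; congr (_ - _).
by rewrite [RHS]mxtrace_mulC mulmxA.
Qed.



Section Red.
Variable g : M -> Prop.
Hypothesis pos : forall Z, g Z -> \tr (Z *m Z) = 0 -> Z = 0.

Lemma reductive_of_pos : reductive_lie g.
Proof.
move=> h [[h0 hD hZ] hg hid] [k hk].
have dsub : forall j A, derived h j A -> h A.
  elim=> [//|j IH] A /=; elim=> //.
  - by move=> C0 /= [A' [B' [HA [HB ->]]]]; apply: hid; [apply: hg; apply: IH | apply: IH].
  - by move=> ? ? _ ? _ ?; apply: hD.
  - by move=> ? ? _ ?; apply: hZ.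
have dideal : forall j Y A, g Y -> derived h j A -> derived h j (lbr Y A).
  elim=> [|j IH] Y A gY /=; first by apply: hid.
  elim.
  - move=> C0 /= [A' [B' [HA [HB ->]]]]; rewrite jacobi; apply: sp_add; apply: sp_gen.
      by exists (lbr Y A'), B'; split; [apply: IH | split].
    by exists A', (lbr Y B'); split; [ | split; [apply: IH |]].
  - by rewrite lbr0r; apply: sp_zero.
  - by move=> ? ? _ ? _ ?; rewrite lbrDr; apply: sp_add.
  - by move=> ? ? _ ?; rewrite lbrZr; apply: sp_scale.
pose C j := forall A, derived h j A -> forall W, g W -> lbr W A = 0.
have step : forall j, C j.+1 -> C j.
  move=> j Cj.
  have ab : forall A B, derived h j A -> derived h j B -> lbr A B = 0.
    move=> A B HA HB.
    have dZ : derived h j.+1 (lbr A B).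
      by apply: sp_gen; exists A, B.
    apply: pos; first by apply: hg; apply: (dsub j.+1).
    rewrite [X in \tr (X *m _)]/(lbr A B) -/(lbr A B) tr_lbr_l.
    by rewrite (Cj _ dZ B (hg _ (dsub _ _ HB))) mulmx0 mxtrace0.
  move=> A HA W gW.
  have dZ := dideal j W A gW HA.
  apply: pos; first by apply: hg; apply: (dsub j).
  by rewrite tr_lbr_l (ab _ _ HA dZ) mulmx0 mxtrace0.
have Ck : C k by move=> A /hk -> W _; apply: lbr0r.
have Ci : forall i, C (k - i)%N.
  elim=> [|i IH]; first by rewrite subn0.
  case: (ltnP i k) => ik.
    by apply: step; rewrite subnSK.
  have e1 : (k - i.+1 = 0)%N by apply/eqP; rewrite subn_eq0 leqW.
  have e2 : (k - i = 0)%N by apply/eqP; rewrite subn_eq0.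
  by rewrite e1 -e2.
move=> A hA; split; first by apply: hg.
move=> B gB; rewrite lbrN.
have := Ci k; rewrite subnn => C0.
by rewrite (C0 A hA B gB) oppr0.
Qed.

Lemma semisimple_of_pos : (forall A, lie_center g A -> A = 0) -> semisimple_lie g.
Proof.
move=> hc h hI hS A hA; apply: hc.
exact: (reductive_of_pos h hI hS A hA).
Qed.
End Red.

End LieP.



Lemma z2 (V : zmodType) (a b x y : V) : a + x + (y - b) = a - b + (x + y).
Proof. by rewrite [y - b]addrC addrACA. Qed.

Lemma z3 (V : zmodType) (p q r s : V) : (- p - q) + (r + s) = (s + r) + (- q - p).
Proof. by rewrite addrC [s + r]addrC [- q - p]addrC. Qed.

Lemma z4 (V : zmodType) (x y x' y' : V) : (x + y) - (x' + y') = (x - x') + (y - y').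
Proof. by rewrite opprD addrACA. Qed.

Section Skew.
Variables (F : fieldType) (L : fieldExtType F) (I : L).
Hypothesis hI : I ^+ 2 = -1.
Variable m : nat.
Notation mp := (map_mx (in_alg L)).

Lemma mpB (X Y : 'M[F]_m) : mp (X - Y) = mp X - mp Y.
Proof. by apply/matrixP => i j; rewrite !mxE rmorphB. Qed.
Lemma mpD (X Y : 'M[F]_m) : mp (X + Y) = mp X + mp Y.
Proof. by apply/matrixP => i j; rewrite !mxE rmorphD. Qed.
Lemma mpM (X Y : 'M[F]_m) : mp (X *m Y) = mp X *m mp Y.
Proof. by rewrite map_mxM. Qed.

Lemma mulS (A B A' B' : 'M[F]_m) :
  (mp A + I *: mp B) *m (mp A' + I *: mp B') =
  mp (A *m A' - B *m B') + I *: mp (A *m B' + B *m A').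
Proof.
rewrite mulmxDl !mulmxDr -!scalemxAl -!scalemxAr scalerA -expr2 hI scaleN1r.
rewrite mpB mpD !mpM scalerDr; apply: z2.
Qed.

Lemma mp0 : mp (0 : 'M[F]_m) = 0.
Proof. by apply/matrixP => i j; rewrite !mxE rmorph0. Qed.
Lemma mpZ c (X : 'M[F]_m) : mp (c *: X) = (c%:A : L) *: mp X.
Proof. by apply/matrixP => i j; rewrite !mxE rmorphM. Qed.
Lemma mp_tr (X : 'M[F]_m) : \tr (mp X) = in_alg L (\tr X).
Proof. by rewrite /mxtrace rmorph_sum; apply: eq_bigr => i _; rewrite mxE. Qed.

Definition skewH (Z : 'M[L]_m) := exists A B : 'M[F]_m,
  [/\ A^T = -A, B^T = B & Z = mp A + I *: mp B].

Lemma skewH0 : skewH 0.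
Proof. by exists 0, 0; rewrite !trmx0 oppr0 mp0 scaler0 addr0. Qed.

Lemma skewHD Z Z' : skewH Z -> skewH Z' -> skewH (Z + Z').
Proof.
move=> [A [B [hA hB ->]]] [A' [B' [hA' hB' ->]]].
exists (A + A'), (B + B'); rewrite !linearD /= hA hA' hB hB'; split => //.
by rewrite !mpD scalerDr addrACA.
Qed.

Lemma skewHZ c Z : skewH Z -> skewH (Fscale c Z).
Proof.
move=> [A [B [hA hB ->]]]; exists (c *: A), (c *: B).
rewrite !linearZ /= hA hB scalerN; split => //.
by rewrite /Fscale !mpZ scalerDr !scalerA mulrC.
Qed.

Lemma skewH_lbr Z Z' : skewH Z -> skewH Z' -> skewH (lbr Z Z').
Proof.
move=> [A [B [hA hB ->]]] [A' [B' [hA' hB' ->]]].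
exists ((A *m A' - B *m B') - (A' *m A - B' *m B)),
       ((A *m B' + B *m A') - (A' *m B + B' *m A)); split.
- rewrite !linearB /= !trmx_mul hA hA' hB hB' !mulNmx !mulmxN !opprK.
  by rewrite addrC.
- rewrite raddfB !raddfD /= !trmx_mul hA hA' hB hB' !mulNmx !mulmxN !opprK.
  exact: z3.
- rewrite /lbr (mulS A B A' B') (mulS A' B' A B) !mpB scalerBr; exact: z4.
Qed.

Lemma trT (X : 'M[F]_m) : \tr (X *m X^T) =
  \sum_(x <- [seq X p.1 p.2 | p <- index_enum ('I_m * 'I_m)%type]) x ^+ 2.
Proof.
rewrite big_map -[RHS]/(\sum_(p : 'I_m * 'I_m) X p.1 p.2 ^+ 2) -(pair_bigA _ (fun i k => X i k ^+ 2)) /=.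
by apply: eq_bigr => i _; rewrite mxE; apply: eq_bigr => k _; rewrite mxE expr2.
Qed.

Hypothesis fr : formally_real F.

Lemma skewH_pos Z : skewH Z -> \tr (Z *m Z) = 0 -> Z = 0.
Proof.
move=> [A [B [hA hB ->]]] htr.
have hAB : \tr (A *m B) + \tr (B *m A) = 0.
  by rewrite -[\tr (B *m A)]mxtrace_tr trmx_mul hA hB mulNmx linearN subrr.
move: htr; rewrite (mulS A B A B) mxtraceD mxtraceZ !mp_tr linearD /=.
rewrite [\tr (A *m B + _)]linearD hAB scale0r mulr0 addr0 linearN /=.
move=> /eqP; rewrite scaler_eq0 oner_eq0 orbF => /eqP htr.
have eA : \tr (A *m A) = - \tr (A *m A^T) by rewrite hA mulmxN linearN opprK.
have eB : \tr (B *m B) = \tr (B *m B^T) by rewrite hB.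
move: htr; rewrite eA trT eB trT -opprD => /eqP; rewrite oppr_eq0 => /eqP.
rewrite -big_cat /= => /(@sos0 _ fr); rewrite all_cat => /andP [/allP aA /allP aB].
have -> : A = 0.
  apply/matrixP => i k; rewrite mxE; apply/eqP/aA.
  by apply: (map_f (fun p : 'I_m * 'I_m => A p.1 p.2) (mem_index_enum (i, k))).
have -> : B = 0.
  apply/matrixP => i k; rewrite mxE; apply/eqP/aB.
  by apply: (map_f (fun p : 'I_m * 'I_m => B p.1 p.2) (mem_index_enum (i, k))).
by rewrite mp0 scaler0 addr0.
Qed.
End Skew.



Lemma z5 (V : zmodType) (a : V) : (a + a) - (- a - a) = a *+ 4.
Proof. by rewrite -opprD opprK -mulr2n -mulr2n -mulrnA. Qed.

Section SpinP.
Variables (F : fieldType) (L : fieldExtType F) (I : L).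
Variables (n r : nat) (adj : rel 'I_n).
Notation G := (spin I r adj).
Notation h := (I / 2%:R).

Lemma ih2 : ((2%:R : F)^-1)%:A = (2%:R : L)^-1.
Proof. by rewrite -[LHS]/(in_alg L (2%:R^-1)) fmorphV rmorph_nat. Qed.

Lemma spin_skew d i : exists S : 'M[F]_(msz d),
  S^T = S /\ G d i = I *: map_mx (in_alg L) S.
Proof.
elim: d i => [|d IH] i /=.
  exists ((2%:R : F)^-1)%:M; rewrite tr_scalar_mx; split => //.
  by rewrite map_scalar_mx scale_scalar_mx /= ih2.
case: eqP => _.
  exists (block_mx 0 ((2%:R : F)^-1)%:M ((2%:R : F)^-1)%:M 0).
  rewrite tr_block_mx !trmx0 tr_scalar_mx; split => //.
  by rewrite map_block_mx !map_mx0 map_scalar_mx scale_block_mx !scaler0 scale_scalar_mx /= ih2.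
have [S [hS ->]] := IH i.
case: (adjn _ _).
  exists (block_mx S 0 0 (- S)).
  rewrite tr_block_mx !trmx0 linearN /= hS; split => //.
  by rewrite map_block_mx !map_mx0 map_mxN scale_block_mx !scaler0 scaleN1r scalerN.
exists (block_mx S 0 0 S).
rewrite tr_block_mx !trmx0 hS; split => //.
by rewrite map_block_mx !map_mx0 scale_block_mx !scaler0 scale1r.
Qed.

Lemma spin_sq d i : (val i < r + d)%N -> G d i *m G d i = (h * h)%:M.
Proof.
elim: d i => [|d IH] i /= Hi.
  by rewrite mul_scalar_mx scale_scalar_mx.
case: eqP => Hn.
  rewrite mulmx_block !mul0mx !mulmx0 !addr0 !add0r mul_scalar_mx scale_scalar_mx.
  by rewrite -scalar_mx_block.
have Hi' : (val i < r + d)%N.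
  by move: Hi; rewrite addnS ltnS leq_eqVlt => /orP [/eqP //|].
rewrite mulmx_block !mul0mx !mulmx0 !addr0 !add0r.
case: (adjn _ _); rewrite ?scaleN1r ?scale1r ?mulNmx ?mulmxN ?opprK IH //;
  by rewrite -scalar_mx_block.
Qed.

Lemma adjn_val (u : 'I_n) j : adjn adj (val u) j = adj u j.
Proof.
apply/existsP/idP => [[k /andP [/eqP /val_inj -> //]] | H].
by exists u; rewrite eqxx H.
Qed.

Hypothesis hsym : symmetric adj.
Hypothesis hind : forall i j : 'I_n, (i < r)%N -> (j < r)%N -> ~~ adj i j.

Lemma ltS d (i : 'I_n) : (val i < r + d.+1)%N -> val i <> (r + d)%N -> (val i < r + d)%N.
Proof. by rewrite addnS ltnS leq_eqVlt => /orP [/eqP //|]. Qed.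

Lemma spin_comm d i j : (val i < r + d)%N -> (val j < r + d)%N -> i != j ->
  G d i *m G d j = (if adj i j then -1 else 1) *: (G d j *m G d i).
Proof.
elim: d i j => [|d IH] i j /= Hi Hj Hij.
  rewrite addn0 in Hi Hj.
  by rewrite (negbTE (hind i j Hi Hj)) scale1r !mul_scalar_mx !scale_scalar_mx mulrC.
case: eqP => Hni; case: eqP => Hnj.
- by case/eqP: Hij; apply: val_inj; exact: (etrans Hni (esym Hnj)).
- rewrite -Hni adjn_val !mulmx_block !mul0mx !mulmx0 !addr0 !add0r.
  rewrite !mul_scalar_mx !mul_mx_scalar.
  case: (adj i j); rewrite ?scale_block_mx ?scaleN1r ?scale1r ?scaler0 ?oppr0 ?scalerN ?opprK //.
- rewrite -Hnj adjn_val hsym !mulmx_block !mul0mx !mulmx0 !addr0 !add0r.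
  rewrite !mul_scalar_mx !mul_mx_scalar.
  case: (adj i j); rewrite ?scale_block_mx ?scaleN1r ?scale1r ?scaler0 ?oppr0 ?scalerN ?opprK //.
- rewrite !mulmx_block !mul0mx !mulmx0 !addr0 !add0r.
  move: (IH i j (@ltS d i Hi Hni) (@ltS d j Hj Hnj) Hij).
  case: (adj i j); case: (adjn _ _ i); case: (adjn _ _ j) => H;
  rewrite ?scale_block_mx ?scaleN1r ?scale1r ?scaler0 ?oppr0 ?scalerN ?opprK ?mulNmx ?mulmxN ?opprK H;
  rewrite ?scale_block_mx ?scaleN1r ?scale1r ?scaler0 ?oppr0 ?scalerN ?opprK ?mulNmx ?mulmxN ?opprK //.
Qed.

Hypothesis hirr : irreflexive adj.

Lemma spin_rel d i j : (val i < r + d)%N -> (val j < r + d)%N -> adj j i ->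
  lbr (G d j) (lbr (G d j) (G d i)) = ((h * h) *+ 4) *: G d i.
Proof.
move=> Hi Hj hji.
have hij : i != j by apply/eqP => e; move: hji; rewrite e hirr.
have c1 := spin_comm d i j Hi Hj hij; rewrite hsym hji scaleN1r in c1.
have sq := spin_sq d j Hj.
rewrite /lbr c1 opprK mulmxDr mulmxDl -mulmxA c1 mulmxN mulmxA sq mul_scalar_mx.
by rewrite -scalerMnl z5.
Qed.
End SpinP.



Theorem mainTheorem11 (F : fieldType) (L : fieldExtType F) (I : L)
    (n r : nat) (adj : rel 'I_n) :
  formally_real F ->
  I ^+ 2 = -1 ->
  (<<1%VS; I>>%VS = fullv) ->
  symmetric adj -> irreflexive adj ->
  (r <= n)%N ->
  (forall i j : 'I_n, (i < r)%N -> (j < r)%N -> ~~ adj i j) ->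
  (forall j : 'I_n, (r <= j)%N -> exists2 i : 'I_n, (i < r)%N & adj i j) ->
  reductive_lie (spin_image I r adj) /\
  ((forall i : 'I_n, exists j : 'I_n, adj i j) ->
     semisimple_lie (spin_image I r adj)).
Proof.
move=> fr hI _ hsym hirr hrn hind _.
have gskew : forall A, spin_image I r adj A -> skewH F L I (msz (n - r)) A.
  move=> A0; elim.
  - move=> A [i ->]; have [S [hS ->]] := spin_skew F L I n r adj (n - r) i.
    by exists 0, S; split; rewrite ?trmx0 ?oppr0 // (mp0 F L _) add0r.
  - exact: skewH0 F L I _.
  - by move=> ? ? _ ? _ ?; apply: (skewHD F L I).
  - by move=> ? ? _ ?; apply: (skewHZ F L I).
  - by move=> ? ? _ ? _ ?; apply: (skewH_lbr F L I hI).
have pos : forall Z, spin_image I r adj Z -> \tr (Z *m Z) = 0 -> Z = 0.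
  by move=> Z gZ; apply: (skewH_pos F L I hI _ fr Z (gskew Z gZ)).
split; first exact: (reductive_of_pos F L _ _ pos).
move=> hnb; apply: (semisimple_of_pos F L _ _ pos).
move=> Z [gZ cZ]; apply: (pos Z gZ).
have twoF : (2%:R : F) != 0.
  apply/eqP => e; have := fr [:: 1]; rewrite big_seq1 expr1n.
  by move: e; rewrite mulr2n => /eqP; rewrite addr_eq0 => ->.
have two : (2%:R : L) != 0 by rewrite -(rmorph_nat (in_alg L)) fmorph_eq0.
have I0 : I != 0.
  apply/eqP => e; move: hI; rewrite e expr0n /= => /eqP.
  by rewrite eq_sym oppr_eq0 oner_eq0.
have c0 : (I / 2%:R * (I / 2%:R)) *+ 4 != 0.
  rewrite -mulr_natr; apply: mulf_neq0; first by apply: mulf_neq0; apply: mulf_neq0 => //; rewrite invr_eq0.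
  by rewrite (_ : 4 = 2 * 2)%N // natrM mulf_neq0.
have ltn : forall i : 'I_n, (val i < r + (n - r))%N by move=> i; rewrite (subnKC hrn) ltn_ord.
suff : forall A, spin_image I r adj A -> \tr (Z *m A) = 0 by move=> H; apply: H gZ.
move=> A0; elim.
- move=> A [i ->]; have [j hij] := hnb i.
  have hji : adj j i by rewrite hsym.
  have e := spin_rel F L I n r adj hsym hind hirr (n - r) i j (ltn i) (ltn j) hji.
  have -> : spin I r adj (n - r) i = ((I / 2%:R * (I / 2%:R)) *+ 4)^-1 *:
      lbr (spin I r adj (n - r) j) (lbr (spin I r adj (n - r) j) (spin I r adj (n - r) i)).
    by rewrite e scalerA mulVf // scale1r.
  rewrite -scalemxAr mxtraceZ (tr_lbr_r F L) cZ ?mul0mx ?mxtrace0 ?mulr0 //.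
  by apply: lg_gen; exists j.
- by rewrite mulmx0 mxtrace0.
- by move=> ? ? _ h1 _ h2; rewrite mulmxDr mxtraceD h1 h2 addr0.
- by move=> ? ? _ h1; rewrite /Fscale -scalemxAr mxtraceZ h1 mulr0.
- by move=> A B gA _ _ _; rewrite (tr_lbr_r F L) cZ // mul0mx mxtrace0.
Qed.
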